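(* Let $(\vec U,\le,{}^*,\vee,\wedge)$ be a universe of separations containing a finite separation system $(\vec S,\le,{}^* )$ (with the induced order and involution). Let $\mathcal F\subseteq 2^{\vec S}$ be a standard set of stars, and suppose $\vec S$ is $\mathcal F$-separable. Then exactly one of the following holds: (i) there exists an $S$-tree over $\mathcal F$; (ii) there exists an $\mathcal F$-tangle of $S$.
   Context: A separation system $(\vec S,\le,{}^* )$ is a partially ordered set with an order-reversing involution ${}^*$ ($\vec r\le\vec s\iff\vec r^{\,*}\ge\vec s^{\,*}$); write $\overleftarrow s:=\vec s^{\,*}$, a separation is $s=\{\vec s,\overleftarrow s\}$, $S$ is the set of separations, $s$ is degenerate if $\vec s=\overleftarrow s$, and $\vec r$ is trivial in $\vec S$ if there is $s\in S$ with $\vec r<\vec s$ and $\vec r<\overleftarrow s$. A star is a nonempty $\sigma\subseteq\vec S$ with $\vec r\le\overleftarrow s$ for all distinct $\vec r,\vec s\in\sigma$. A universe of separations is a separation system in which any two elements have a supremum $\vee$ and infimum $\wedge$. An orientation of $S$ contains exactly one of $\vec s,\overleftarrow s$ for each $s\in S$; a set $O\subseteq\vec S$ is consistent if there are no distinct $r,s\in S$ with orientations $\vec r<\vec s$ such that $\overleftarrow r,\vec s\in O$; $O$ avoids $\mathcal F$ if no subset of $O$ is in $\mathcal F$; an $\mathcal F$-tangle of $S$ is a consistent orientation of $S$ avoiding $\mathcal F$. $\mathcal F$ forces $\vec r$ if $\{\overleftarrow r\}\in\mathcal F$ or $r$ is degenerate; $\mathcal F$ is standard if it forces every trivial element of $\vec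 S$ (so every element not forced by a standard $\mathcal F$ is nontrivial and nondegenerate). An $S$-tree is a pair $(T,\alpha)$, $T$ a finite tree with at least one edge, $\alpha:\vec E(T)\to\vec S$ with $\alpha(y,x)=\alpha(x,y)^*$; it is over $\mathcal F$ if $\alpha(\{(y,t):yt\in E(T)\})\in\mathcal F$ for every node $t$. For nontrivial nondegenerate $\vec r\in\vec S$, $\vec S_{\ge\vec r}$ is the set of all orientations of those $s\in S$ having an orientation $\ge\vec r$; for $\vec s_0\ge\vec r$ the shifting map $f^{\vec r}_{\vec s_0}:\vec S_{\ge\vec r}\to\vec U$ is given by $f(\vec s)=\vec s\vee\vec s_0$, $f(\overleftarrow s)=(\vec s\vee\vec s_0)^*$ for all $\vec s\in\vec S_{\ge\vec r}\setminus\{\overleftarrow r\}$ with $\vec s\ge\vec r$. $\vec s_0\in\vec S$ is linked to $\vec r$ if $\vec s_0\ge\vec r$ and $\vec s\vee\vec s_0\in\vec S$ for all $\vec s\in\vec S$ with $\vec s\ge\vec r$, $\vec s\neq\overleftarrow r$; it is $\mathcal F$-linked to $\vec r$ if moreover $f^{\vec r}_{\vec s_0}(\sigma)\in\mathcal F$ for every star $\sigma\in\mathcal F$ with $\sigma\subseteq\vec S_{\ge\vec r}\setminus\{\overleftarrow r\}$ having an element $\ge\vec r$. $\vec S$ is $\mathcal F$-separable if for all $\vec r,\vec r\,'\in\vec S$ with $\vec r\le\vec r\,'$ such that $\mathcal F$ forces neither $\vec r$ nor $\overleftarrow{r'}$, there is $s_0\in S$ with an orientation $\vec s_0$ that is $\mathcal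 F$-linked to $\vec r$ and such that $\overleftarrow s_0$ is $\mathcal F$-linked to $\overleftarrow{r'}$. *)

(* Defs.v *)
From Stdlib Require List.
From mathcomp Require Import all_boot.
Set Implicit Arguments.
Unset Strict Implicit.
Unset Printing Implicit Defensive.

Section Separations.
Variable U : Type.
Variable le : U -> U -> Prop.
Variable star : U -> U.
Variable join meet : U -> U -> U.

Definition lt (x y : U) : Prop := le x y /\ x <> y.

Definition is_universe : Prop :=
  (forall x, le x x) /\
  (forall x y, le x y -> le y x -> x = y) /\
  (forall x y z, le x y -> le y z -> le x z) /\
  (forall x, star (star x) = x) /\
  (forall x y, le x y <-> le (star y) (star x)) /\
  (forall x y, le x (join x y) /\ le y (join x y) /\
     forall z, le x z -> le y z -> le (join x y) z) /\
  (forall x y, le (meet x y) x /\ le (meet x y) y /\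
     forall z, le z x -> le z y -> le z (meet x y)).

Variable Sv : U -> Prop.

Definition is_subsystem : Prop := forall x, Sv x -> Sv (star x).

Definition finite_sys : Prop := exists l : list U, forall x, Sv x -> Stdlib.Lists.List.In x l.

Definition degenerate (x : U) : Prop := x = star x.

Definition trivial_in (x : U) : Prop :=
  exists s, Sv s /\ lt x s /\ lt x (star s).

Definition is_star (sigma : U -> Prop) : Prop :=
  (exists x, sigma x) /\
  forall x y, sigma x -> sigma y -> x <> y -> le x (star y).

Variable F : (U -> Prop) -> Prop.

Definition forces (x : U) : Prop :=
  F (fun u => u = star x) \/ degenerate x.

Definition standard : Prop := forall x, Sv x -> trivial_in x -> forces x.

Definition orientation (O : U -> Prop) : Prop :=
  (forall x, O x -> Sv x) /\
  forall x, Sv x -> (O x \/ O (star x)) /\ (x <> star x -> ~ (O x /\ O (star x))).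

(* no distinct separations r, s with orientations r < s and r*, s in O
   (a := r*, b := s) *)
Definition consistent (O : U -> Prop) : Prop :=
  ~ exists a b, O a /\ O b /\ lt (star a) b /\ ~ (b = a \/ b = star a).

Definition avoids (O : U -> Prop) : Prop :=
  ~ exists sigma, F sigma /\ forall x, sigma x -> O x.

Definition tangle (O : U -> Prop) : Prop :=
  orientation O /\ consistent O /\ avoids O.

Definition is_tree (V : finType) (e : rel V) : Prop :=
  symmetric e /\ irreflexive e /\ (forall x y, connect e x y) /\
  forall p : seq V, ~~ (ucycleb e p && (2 < size p)).

Definition exists_S_tree_over : Prop :=
  exists (V : finType) (e : rel V) (alpha : V -> V -> U),
    is_tree e /\ (exists x y, e x y) /\
    (forall x y, e x y -> Sv (alpha x y) /\ alpha y x = star (alpha x y)) /\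
    forall t : V, F (fun u => exists y, e y t /\ u = alpha y t).

Definition S_geq (r : U) (x : U) : Prop := Sv x /\ (le r x \/ le r (star x)).

(* graph of the shifting map f^r_{s0} *)
Definition shift_rel (r s0 x u : U) : Prop :=
  (le r x /\ x <> star r /\ u = join x s0) \/
  (le r (star x) /\ star x <> star r /\ u = star (join (star x) s0)).

Definition linked (s0 r : U) : Prop :=
  le r s0 /\ forall s, Sv s -> le r s -> s <> star r -> Sv (join s s0).

Definition F_linked (s0 r : U) : Prop :=
  linked s0 r /\
  forall sigma, is_star sigma -> F sigma ->
    (forall x, sigma x -> S_geq r x /\ x <> star r) ->
    (exists x, sigma x /\ le r x) ->
    F (fun u => exists x, sigma x /\ shift_rel r s0 x u).

Definition F_separable : Prop :=
  forall r r', Sv r -> Sv r' -> le r r' -> ~ forces r -> ~ forces (star r') ->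
    exists s0, Sv s0 /\ F_linked s0 r /\ F_linked (star s0) (star r').

End Separations.

(* Main.v *)
Require Import Defs.
From mathcomp Require Import all_boot zify.
From Stdlib Require Import Lia Classical ClassicalEpsilon FunctionalExtensionality PropExtensionality.
Set Implicit Arguments.
Unset Strict Implicit.

Section Sep.
Variables (U : Type) (le : U -> U -> Prop) (star : U -> U) (join meet : U -> U -> U) (Sv : U -> Prop).
Hypothesis Huniv : is_universe le star join meet.
Hypothesis Hsub : is_subsystem star Sv.
Variable l : list U.
Hypothesis Hfin : forall x, Sv x -> List.In x l.

Lemma le_refl x : le x x. Proof. by case: Huniv. Qed.
Lemma le_anti x y : le x y -> le y x -> x = y. Proof. case: Huniv => _ [h _]; exact: h. Qed.
Lemma le_tr x y z : le x y -> le y z -> le x z. Proof. case: Huniv => _ [_ [h _]]; exact: h. Qed.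
Lemma starK x : star (star x) = x. Proof. case: Huniv => _ [_ [_ [h _]]]; exact: h. Qed.
Lemma le_star x y : le x y <-> le (star y) (star x). Proof. case: Huniv => _ [_ [_ [_ [h _]]]]; exact: h. Qed.
Lemma join_ub1 x y : le x (join x y). Proof. case: Huniv => _ [_ [_ [_ [_ [h _]]]]]; exact: (proj1 (h x y)). Qed.
Lemma join_ub2 x y : le y (join x y). Proof. case: Huniv => _ [_ [_ [_ [_ [h _]]]]]; exact: (proj1 (proj2 (h x y))). Qed.
Lemma join_lub x y z : le x z -> le y z -> le (join x y) z.
Proof. case: Huniv => _ [_ [_ [_ [_ [h _]]]]]; exact: (proj2 (proj2 (h x y))). Qed.
Lemma join_eq x y : le x y -> join x y = y.
Proof. move=> h; apply: le_anti; [apply: join_lub => //; exact: le_refl | exact: join_ub2]. Qed.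
Lemma le_flip x y : le x (star y) -> le y (star x).
Proof. move=> h; have := (proj1 (le_star x (star y)) h); by rewrite starK. Qed.
Lemma le_flip2 x y : le (star x) y -> le (star y) x.
Proof. move=> h; have := (proj1 (le_star (star x) y) h); by rewrite starK. Qed.
Lemma star_inj x y : star x = star y -> x = y.
Proof. by move=> h; rewrite -(starK x) h starK. Qed.
Lemma Sv_star x : Sv x -> Sv (star x). Proof. exact: Hsub. Qed.

Lemma nontriv_cases x z : ~ trivial_in le star Sv x -> Sv z -> le x z -> le x (star z) ->
  z = x \/ z = star x.
Proof.
move=> hnt hz h1 h2.
case: (classic (z = x)) => [->|nzx]; first by left.
case: (classic (z = star x)) => [->|nzs]; first by right.
exfalso; apply: hnt; exists z; split=> //; split; split=> // e.
- by apply: nzx.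
- by apply: nzs; rewrite e starK.
Qed.

Definition dec (P : Prop) : bool := if excluded_middle_informative P then true else false.
Lemma decP (P : Prop) : dec P <-> P.
Proof. rewrite /dec; case: excluded_middle_informative => //. Qed.

Inductive Bl (F : (U -> Prop) -> Prop) : U -> Prop :=
 | bl_intro : forall (sigma : U -> Prop) w, F sigma -> sigma w ->
      (forall y, sigma y -> y <> w -> Bl F (star y)) -> Bl F w.

Section WithF.
Variable F : (U -> Prop) -> Prop.

Hypothesis HF : forall s, F s -> is_star le star s /\ (forall x, s x -> Sv x).

Lemma Bl_Sv w : Bl F w -> Sv w.
Proof. case=> s w' Fs sw _; exact: (proj2 (HF Fs) _ sw). Qed.

Lemma forced_Bl x : F (fun u => u = star x) -> Bl F (star x).
Proof. move=> h; apply: (bl_intro h) => // y -> //. Qed.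

Definition nopair := forall z, Bl F z -> Bl F (star z) -> False.

Lemma star_rel s a b : F s -> s a -> s b -> a <> b -> le a (star b).
Proof. move=> Fs sa sb ab; case: (HF Fs) => [[_ h] _]; exact: h. Qed.

Lemma shift_Bl x s0 : ~ trivial_in le star Sv x -> x <> star x ->
  F_linked le star join Sv F s0 x -> ~ Bl F (star x) ->
  forall w, Bl F w -> le x w -> w <> star x -> Bl F (join w s0).
Proof.
move=> hnt hnd [hlk hFl] hnb w Hw.
elim: Hw => {w} sigma w Fs sw Hy IH hxw hw.
case: (classic (exists y, sigma y /\ y <> w /\ y = star x)) => [[y [sy [ne e]]]|Hn1].
  subst y.
  have h1 : le w x by rewrite -[X in le w X]starK; exact: (star_rel Fs sw sy (nesym ne)).
  have ewx : w = x by apply: le_anti.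
  subst w. have := IH _ sy ne; rewrite starK; apply=> //; exact: le_refl.
case: (classic (exists y, sigma y /\ y <> w /\ y = x)) => [[y [sy [ne e]]]|Hn2].
  by subst y; case: hnb; apply: Hy.
have Hsv z : sigma z -> Sv z by exact: (proj2 (HF Fs)).
have Hge z : sigma z -> z <> w -> le x (star z).
  move=> sz nzw; apply: le_tr hxw _; exact: (star_rel Fs sw sz (nesym nzw)).
apply: (bl_intro (sigma := fun u => exists z, sigma z /\ shift_rel le star join x s0 z u)).
- apply: hFl => //.
  + exact: (proj1 (HF Fs)).
  + move=> z sz; case: (classic (z = w)) => [->|nzw].
      by split=> //; split; [exact: Hsv | left].
    split; first by split; [exact: Hsv | right; exact: Hge].
    by move=> e; apply: Hn1; exists z.
  + by exists w.
- by exists w; split=> //; left.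
- move=> u [z [sz Hsh]] hne.
  case: (classic (z = w)) => [ezw|nzw].
    subst z; case: Hsh => [[_ [_ e]]|[h1 [h2 _]]]; first by case: hne.
    case: (nontriv_cases hnt (Hsv _ sw) hxw h1) => e; first by case: h2; rewrite e.
    by case: hw.
  case: Hsh => [[h1 [h2 _]]|[h1 [h2 ->]]].
    case: (nontriv_cases hnt (Hsv _ sz) h1 (Hge _ sz nzw)) => e.
      by case: Hn2; exists z.
    by case: Hn1; exists z.
  rewrite starK; apply: IH => //.
Qed.

Hypothesis Hstd : standard le star Sv F.
Hypothesis Hsep : F_separable le star join Sv F.

Lemma unforced_nt x : Sv x -> ~ forces star F x -> ~ trivial_in le star Sv x /\ x <> star x.
Proof.
move=> Sx nf; split=> [t|e]; apply: nf; [exact: Hstd | by right].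
Qed.

Lemma blocked_unforced (np : nopair) x : Bl F x -> ~ forces star F x.
Proof.
move=> Bx [h|e]; first by apply: (np x Bx); exact: forced_Bl.
by apply: (np x Bx); rewrite -e.
Qed.

Lemma cross (np : nopair) a b : Bl F a -> Bl F b -> le a (star b) -> False.
Proof.
move=> Ba Bb hab.
have Sa := Bl_Sv Ba; have Sb := Bl_Sv Bb.
have ufa := blocked_unforced np Ba; have ufb := blocked_unforced np Bb.
case: (Hsep Sa (Sv_star Sb) hab ufa) => [|s0 [Ss0 [La Lb]]]; first by rewrite starK.
rewrite starK in Lb.
case: (unforced_nt Sa ufa) => nta nda; case: (unforced_nt Sb ufb) => ntb ndb.
have h1 := shift_Bl nta nda La (fun h => np a Ba h) Ba (le_refl a) nda.
have h2 := shift_Bl ntb ndb Lb (fun h => np b Bb h) Bb (le_refl b) ndb.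
rewrite join_eq in h1; last exact: (proj1 (proj1 La)).
rewrite join_eq in h2; last exact: (proj1 (proj1 Lb)).
exact: (np s0 h1 h2).
Qed.

Definition B x := Sv x /\ exists c, Bl F c /\ le c x.

Lemma B_up x y : B x -> Sv y -> le x y -> B y.
Proof. move=> [_ [c [Bc lc]]] Sy lxy; split=> //; exists c; split=> //; exact: le_tr lxy. Qed.

Lemma Bl_B x : Bl F x -> B x.
Proof. move=> Bx; split; [exact: Bl_Sv | exists x; split=> //; exact: le_refl]. Qed.

Lemma crossB (np : nopair) a b : B a -> B b -> le a (star b) -> False.
Proof.
move=> [_ [c1 [B1 l1]]] [_ [c2 [B2 l2]]] h.
apply: (cross np B1 B2); apply: le_tr l1 _; apply: le_tr h _.
exact: (proj1 (le_star c2 b) l2).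
Qed.

Lemma B_nopair (np : nopair) a : B a -> B (star a) -> False.
Proof. move=> h1 h2; apply: (crossB np h1 h2); rewrite starK; exact: le_refl. Qed.

Lemma genuine_B sigma x : F sigma -> sigma x -> (forall y, sigma y -> y <> x -> Bl F (star y)) -> B x.
Proof. move=> Fs sx h; apply: Bl_B; exact: (bl_intro Fs sx h). Qed.

Lemma filter_in (p : U -> bool) L z : List.In z L -> p z -> List.In z (List.filter p L).
Proof. move=> h pz; apply/List.filter_In; split=> //. Qed.

Lemma filter_len_lt (p : U -> bool) L z : List.In z L -> p z = false ->
  (length (List.filter p L) < length L)%nat.
Proof.
elim: L => //= a L IH [ea|h] pz.
  subst a; rewrite pz ltnS; apply/leP; exact: List.filter_length_le.
case: (p a) => /=; first by rewrite ltnS; exact: IH.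
apply: ltn_trans (IH h pz) _ => //.
Qed.

Lemma closeB (np : nopair) : forall n sigma x L, F sigma -> sigma x ->
  (forall y, sigma y -> y <> x -> B (star y)) ->
  (forall y, sigma y -> y <> x -> ~ Bl F (star y) -> List.In y L) ->
  (length L <= n)%nat -> B x.
Proof.
elim=> [|n IHn] sigma x L Fs sx hB hL hn.
  apply: (genuine_B Fs sx) => y sy nyx; apply: NNPP => nb.
  by move: (hL y sy nyx nb); case: L hn hL.
case: (classic (exists y, sigma y /\ y <> x /\ ~ Bl F (star y))) => [[y [sy [nyx nb]]]|Hall]; last first.
  apply: (genuine_B Fs sx) => y sy nyx; apply: NNPP => nb; apply: Hall; by exists y.
have Sv_s z : sigma z -> Sv z by exact: (proj2 (HF Fs)).
have Sy := Sv_s _ sy.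
have [_ [c [Bc lc]]] := hB y sy nyx.
case: (classic (sigma (star y))) => sys.
  case: (classic (star y = x)) => [<-|ne]; first exact: hB.
  exfalso; apply: (B_nopair np (a := y)); last exact: hB.
  by have := hB _ sys ne; rewrite starK.
have ndy : y <> star y by move=> e; apply: sys; rewrite -e.
have ufy : ~ forces star F y.
  by case=> [h|e]; [apply: nb; exact: forced_Bl | apply: ndy].
have ufc := blocked_unforced np Bc.
have Sc := Bl_Sv Bc.
case: (Hsep Sy (Sv_star Sc) (le_flip lc) ufy) => [|s0 [Ss0 [Ly Lc]]]; first by rewrite starK.
rewrite starK in Lc.
have [ntc ndc] := unforced_nt Sc ufc.
have [nty _] := unforced_nt Sy ufy.
have Bs0 : Bl F (star s0).
  have := shift_Bl ntc ndc Lc (fun h => np c Bc h) Bc (le_refl c) ndc.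
  by rewrite join_eq //; exact: (proj1 (proj1 Lc)).
have ys0 : le y s0 := proj1 (proj1 Ly).
have lyz z : sigma z -> z <> y -> le y (star z).
  move=> sz nzy; exact: (star_rel Fs sy sz (nesym nzy)).
set g := fun z => star (join (star z) s0).
set sigma' := fun u => exists z, sigma z /\ shift_rel le star join y s0 z u.
have Fs' : F sigma'.
  apply: (proj2 Ly) => //.
  - exact: (proj1 (HF Fs)).
  - move=> z sz; case: (classic (z = y)) => [->|nzy].
      by split=> //; split=> //; left; exact: le_refl.
    split; first by split; [exact: Sv_s | right; exact: lyz].
    by move=> e; apply: sys; rewrite -e.
  - by exists y; split=> //; exact: le_refl.
have Hz z u : sigma z -> shift_rel le star join y s0 z u ->
   (z = y /\ u = s0) \/ (z <> y /\ u = g z).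
  move=> sz [[h1 [h2 ->]]|[h1 [h2 ->]]].
    case: (classic (z = y)) => [->|nzy]; first by left; split=> //; rewrite join_eq.
    case: (nontriv_cases nty (Sv_s _ sz) h1 (lyz _ sz nzy)) => e; first by [].
    by exfalso; apply: sys; rewrite -e.
  case: (classic (z = y)) => [e|nzy]; last by right.
  by exfalso; apply: h2; rewrite e.
have gxx : le (g x) x by apply: le_flip2; exact: join_ub1.
have sg : sigma' (g x).
  exists x; split=> //; right; split; first exact: (lyz _ sx (nesym nyx)).
  by split=> // e; apply: nyx; apply: star_inj.
have inL : List.In y L by exact: hL.
set L' := List.map g (List.filter (fun z => ~~ dec (z = y)) L).
have hlen : (length L' <= n)%nat.
  rewrite /L' List.length_map -ltnS; apply: leq_trans hn.
  apply: (filter_len_lt inL); apply/negbF; exact/decP.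
apply: (B_up (IHn sigma' (g x) L' Fs' sg _ _ hlen) (Sv_s _ sx) gxx).
- move=> u [z [sz hs]] nu.
  case: (Hz _ _ sz hs) => [[_ ->]|[nzy eu]]; first exact: Bl_B.
  case: (classic (z = x)) => [ezx|nzx]; first by case: nu; rewrite eu ezx.
  apply: (B_up (hB z sz nzx)).
    rewrite eu /g starK; apply: (proj2 (proj1 Ly)).
    - exact: (Sv_star (Sv_s _ sz)).
    - exact: lyz.
    - by move=> e; apply: nzy; apply: star_inj.
  by rewrite eu /g starK; exact: join_ub1.
- move=> u [z [sz hs]] nu nbu.
  case: (Hz _ _ sz hs) => [[_ eu]|[nzy eu]]; first by case: nbu; rewrite eu.
  case: (classic (z = x)) => [ezx|nzx]; first by case: nu; rewrite eu ezx.
  rewrite eu; apply: List.in_map; apply: filter_in.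
    apply: hL => // nbz; apply: nbu; rewrite eu /g starK.
    apply: (shift_Bl nty ndy Ly nb nbz); first exact: lyz.
    by move=> e; apply: nzy; apply: star_inj.
  by apply/negP => /decP.
Qed.

Lemma closeB' (np : nopair) sigma x : F sigma -> sigma x ->
  (forall y, sigma y -> y <> x -> B (star y)) -> B x.
Proof.
move=> Fs sx hB; apply: (closeB np (n := length l) (L := l) Fs sx hB) => //.
move=> y sy _ _; apply: Hfin; exact: (proj2 (HF Fs)).
Qed.

Lemma nodeg (np : nopair) sigma d : F sigma -> sigma d -> d <> star d.
Proof.
move=> Fs sd e.
have Bd : Bl F d.
  apply: (bl_intro Fs sd) => y sy nyd.
  have Sy : Sv y by exact: (proj2 (HF Fs)).
  have l1 : le y d by have := star_rel Fs sy sd nyd; rewrite -e.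
  have l2 : le d (star y) by exact: (star_rel Fs sd sy (nesym nyd)).
  have tr : trivial_in le star Sv y.
    exists d; split; first exact: (proj2 (HF Fs)).
    split; [split; [exact: l1 | by move=> h; apply: nyd] | split; [by rewrite -e | by rewrite -e => h; apply: nyd]].
  case: (Hstd Sy tr) => [h|ey]; first exact: forced_Bl.
  exfalso; apply: nyd; apply: le_anti l1 _; by rewrite [X in le d X]ey.
by apply: (np d Bd); rewrite -e.
Qed.

Definition Otan x := Sv x /\ ~ B x.

Lemma final_tangle (np : nopair)
  (nofree : forall x, Sv x -> ~ B x -> ~ B (star x) -> x = star x) :
  tangle le star Sv F Otan.
Proof.
have getB y : Sv y -> ~ B y -> y <> star y -> B (star y).
  move=> Sy nBy nd; apply: NNPP => h; apply: nd; exact: nofree.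
split; [split|split].
- by move=> x [].
- move=> x Sx; split.
    case: (classic (B x)) => hx; last by left.
    right; split; first exact: Sv_star.
    by move=> h; apply: (B_nopair np hx h).
  by move=> nd [[_ h1] [_ h2]]; apply: nd; exact: nofree.
- move=> [a [b [[Sa nBa] [[Sb nBb] [[lab nab] nor]]]]].
  case: (classic (a = star a)) => ea.
    case: (classic (b = star b)) => eb.
      apply: nor; left; apply: le_anti.
        by have h := le_flip2 lab; rewrite -eb in h.
      by have h := lab; rewrite -ea in h.
    have := getB b Sb nBb eb => hB.
    apply: nBa; apply: (B_up hB Sa); exact: le_flip2.
  have := getB a Sa nBa ea => hB.
  by apply: nBb; apply: (B_up hB Sb).
- move=> [s [Fs Hs]].
  have [[x0 sx0] _] := proj1 (HF Fs).
  case: (Hs x0 sx0) => _ nB; apply: nB; apply: (closeB' np Fs sx0) => y sy _.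
  case: (Hs y sy) => Sy nBy; apply: getB => //; exact: (nodeg np Fs sy).
Qed.

Section Step.
Variable x : U.
Hypothesis np : nopair.
Hypothesis Sx : Sv x.
Hypothesis nBx : ~ B x.
Hypothesis nBsx : ~ B (star x).
Hypothesis ndx : x <> star x.
Hypothesis minx : forall y, Sv y -> ~ B y -> ~ B (star y) -> y <> star y -> ~ lt le y x.

Definition Hfam (s : U -> Prop) := F s \/ (exists z, B z /\ s = (fun u => u = z)) \/ s = (fun u => u = star x).
Definition Gfam (s : U -> Prop) := F s \/ (exists z, Sv z /\ le (star x) z /\ s = (fun u => u = z)).

Lemma ufx : ~ forces star F x.
Proof. case=> [h|e]; [apply: nBsx; apply: Bl_B; exact: forced_Bl | exact: ndx]. Qed.

Lemma ntx : ~ trivial_in le star Sv x.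
Proof. exact: (proj1 (unforced_nt Sx ufx)). Qed.

Lemma up_min z : Sv z -> le (star x) z -> B z \/ z = star x.
Proof.
move=> Sz lz; case: (classic (B z)) => bz; first by left.
case: (classic (z = star x)) => ez; first by right.
exfalso.
have l1 : le (star z) x by exact: le_flip2.
have ne1 : star z <> x by move=> e; apply: ez; rewrite -e starK.
have nB1 : ~ B (star z) by move=> h; apply: nBx; exact: (B_up h Sx l1).
case: (classic (star z = z)) => e.
  apply: (minx (y := star x)); [exact: Sv_star | exact: nBsx | by rewrite starK | |].
    by move=> h; apply: ndx; exact: star_inj h.
  split; last by move=> h; apply: ndx; rewrite h.
  by apply: le_tr lz _; rewrite -e.
apply: (minx (y := star z)); [exact: Sv_star | exact: nB1 | by rewrite starK | | by split].
by rewrite starK => h; apply: e.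
Qed.

Lemma G_to_H w : Bl Gfam w -> Bl Hfam w.
Proof.
elim=> {w} s w Gs sw _ IH; apply: (bl_intro (sigma := s)) => //.
case: Gs => [Fs|[z [Sz [lz ->]]]]; first by left.
case: (up_min Sz lz) => [bz|->]; [right; left; by exists z | by right; right].
Qed.

Lemma rerootH w : Bl Hfam w -> Bl Hfam (star w) -> B w \/ Bl Hfam x.
Proof.
elim=> {w} s w Hs sw Hy IH Hw'.
case: Hs => [Fs|[[z [Bz es]]|es]]; last first.
- by right; subst s; move: Hw'; rewrite sw starK.
- by left; subst s; rewrite sw.
case: (classic (exists y, s y /\ y <> w /\ ~ B (star y))) => [[y [sy [nyw nB]]]|Hall].
  have := IH y sy nyw; rewrite starK => h.
  case: h => [||h]; last by right.
    apply: (bl_intro (sigma := s)) => //; first by left.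
    move=> y' sy' ny'; case: (classic (y' = w)) => [->|nw] //; exact: Hy.
  by move=> h; case: nB.
left; apply: (closeB' np Fs sw) => y sy nyw; apply: NNPP => nB; apply: Hall; by exists y.
Qed.

Lemma M_H w : Bl Hfam w -> le x w -> w <> star x -> B w.
Proof.
elim=> {w} s w Hs sw Hy IH hxw hw.
case: Hs => [Fs|[[z [Bz es]]|es]]; last first.
- by subst s; case: hw.
- by subst s; rewrite sw.
apply: (closeB' np Fs sw) => y sy nyw; apply: IH => //.
  apply: le_tr hxw _; exact: (star_rel Fs sw sy (nesym nyw)).
move=> e; have eyx : y = x by apply: star_inj.
subst y.
have l1 : le x (star w) by apply: le_flip; exact: (star_rel Fs sw sy (nesym nyw)).
case: (nontriv_cases ntx (proj2 (HF Fs) _ sw) hxw l1) => e'; [exact: nyw | exact: hw].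
Qed.

Lemma G_nopair w : Bl Gfam w -> Bl Gfam (star w) -> False.
Proof.
move=> h1 h2; have H1 := G_to_H h1; have H2 := G_to_H h2.
have hx : ~ Bl Hfam x by move=> h; apply: nBx; apply: (M_H h (le_refl x)).
case: (rerootH H1 H2) => [b1|//].
case: (rerootH H2) => [|b2|//]; first by rewrite starK.
exact: (B_nopair np b1 b2).
Qed.
End Step.
End WithF.

Definition HFp (F : (U -> Prop) -> Prop) :=
  forall s, F s -> is_star le star s /\ (forall x, s x -> Sv x).

Lemma linked_up (F : (U -> Prop) -> Prop) (P : U -> Prop) s0 r :
  (forall z z', P z -> le z z' -> P z') -> ~ trivial_in le star Sv r ->
  F_linked le star join Sv F s0 r ->
  F_linked le star join Sv (fun s => F s \/ exists z, Sv z /\ P z /\ s = (fun u => u = z)) s0 r.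
Proof.
move=> Pup nt [hl hF]; split=> // s st [Fs|[z [Sz [Pz es]]]] hall [x0 [sx0 lx0]].
  by left; apply: hF => //; exists x0.
subst s; subst x0; right; exists (join z s0); split.
  by apply: (proj2 hl) => //; exact: (proj2 (hall z erefl)).
split; first by apply: Pup Pz _; exact: join_ub1.
apply: functional_extensionality => u; apply: propositional_extensionality; split.
  move=> [z' [ez [[_ [_ ->]]|[h1 [h2 _]]]]]; first by rewrite ez.
  subst z'; case: (nontriv_cases nt Sz lx0 h1) => e; first by case: h2; rewrite e.
  by case: (proj2 (hall z erefl)).
move=> ->; exists z; split=> //; left; split=> //; split=> //.
exact: (proj2 (hall z erefl)).
Qed.

Lemma filter_mono (p q : U -> bool) L : (forall z, q z -> p z) ->
  (length (List.filter q L) <= length (List.filter p L))%nat.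
Proof.
move=> h; elim: L => //= a L IH.
case qa: (q a); first by rewrite (h _ qa).
by case: (p a) => //=; apply: leq_trans IH _.
Qed.

Lemma filter_strict (p q : U -> bool) L z : (forall z, q z -> p z) -> List.In z L -> p z -> q z = false ->
  (length (List.filter q L) < length (List.filter p L))%nat.
Proof.
move=> h; elim: L => //= a L IH [ea|hin] pz qz.
  by subst a; rewrite pz qz ltnS; exact: filter_mono.
case qa: (q a); first by rewrite (h _ qa) ltnS; exact: IH.
case: (p a) => //=; last exact: IH.
apply: ltnW; exact: IH.
Qed.

Definition cnt F := length (List.filter (fun z => ~~ dec (forces star F z)) l).

Lemma lt_trans' a b c : lt le a b -> lt le b c -> lt le a c.
Proof.
move=> [l1 n1] [l2 n2]; split; first exact: le_tr l2.
move=> e; subst c; apply: n2; exact: le_anti.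
Qed.

Definition free F y := Sv y /\ ~ B F y /\ ~ B F (star y) /\ y <> star y.

Lemma min_free F : forall n x0, (length (List.filter (fun z => dec (lt le z x0)) l) <= n)%nat ->
  free F x0 -> exists x, free F x /\ forall y, free F y -> ~ lt le y x.
Proof.
elim=> [|n IH] x0 hn fx0.
all: case: (classic (exists y, free F y /\ lt le y x0)) => [[y [fy ly]]|hno];
  last by exists x0; split=> // y fy ly; apply: hno; exists y.
all: have hlt : (length (List.filter (fun z => dec (lt le z y)) l) <
          length (List.filter (fun z => dec (lt le z x0)) l))%nat.
all: try (apply: (filter_strict (z := y));
  [ move=> z /decP h; apply/decP; exact: lt_trans' h ly
  | exact: (Hfin (proj1 fy))
  | exact/decP
  | by apply/negbTE/negP => /decP [_ ] ]).
  by have := leq_trans hlt hn.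
apply: (IH y _ fy); rewrite -ltnS; exact: leq_trans hlt hn.
Qed.

Lemma G_hyps F x : HFp F -> standard le star Sv F -> F_separable le star join Sv F ->
  HFp (Gfam F x) /\ standard le star Sv (Gfam F x) /\ F_separable le star join Sv (Gfam F x).
Proof.
move=> HF Hstd Hsep.
have fG y : forces star F y -> forces star (Gfam F x) y by case=> [h|h]; [left; left | right].
split; last split.
- move=> s [Fs|[z [Sz [lz ->]]]]; first exact: HF.
  split; last by move=> u ->.
  by split; [exists z | move=> a b -> -> ].
- move=> y Sy ty; apply: fG; exact: Hstd.
- move=> r r' Sr Sr' lr nf1 nf2.
  have nf1' : ~ forces star F r by move=> h; apply: nf1; exact: fG.
  have nf2' : ~ forces star F (star r') by move=> h; apply: nf2; exact: fG.
  case: (Hsep r r' Sr Sr' lr nf1' nf2') => s0 [Ss0 [L1 L2]].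
  exists s0; split=> //; split.
    apply: linked_up L1; first by move=> z z' h1 h2; exact: le_tr h2.
    exact: (proj1 (unforced_nt Hstd Sr nf1')).
  apply: linked_up L2; first by move=> z z' h1 h2; exact: le_tr h2.
  exact: (proj1 (unforced_nt Hstd (Sv_star Sr') nf2')).
Qed.

Lemma mainQ : forall n F, (cnt F <= n)%nat -> HFp F -> standard le star Sv F -> F_separable le star join Sv F ->
  (exists w, Bl F w /\ Bl F (star w)) \/ exists O, tangle le star Sv F O.
Proof.
elim=> [|n IH] F hn HF Hstd Hsep;
 (case: (classic (exists w, Bl F w /\ Bl F (star w))) => [hp|hnp]; first by left);
 (have np : nopair F by move=> w h1 h2; apply: hnp; exists w);
 (case: (classic (exists x, free F x)) => [[x0 fx0]|hnf];
   last by right; exists (Otan F); apply: final_tangle => // x Sx n1 n2; apply: NNPP => nd; apply: hnf; exists x);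
 (case: (min_free (leqnn _) fx0) => x [[Sx [nBx [nBsx ndx]]] minx]);
 (have hlt : (cnt (Gfam F x) < cnt F)%nat;
   [ apply: (filter_strict (z := x));
     [ move=> z /negP h; apply/negP => /decP h'; apply: h; apply/decP;
       case: h' => [h'|h']; [by left; left | by right]
     | exact: Hfin
     | apply/negP => /decP; exact: (ufx HF nBsx ndx)
     | apply/negbTE; rewrite negbK; apply/decP; left; right; exists (star x); split;
         [exact: Sv_star | split; [exact: le_refl | by []]] ] | ]).
  by have := leq_trans hlt hn.
have [HG [SG PG]] := G_hyps x HF Hstd Hsep.
case: (IH (Gfam F x) _ HG SG PG) => [|[w [h1 h2]]|[O [Or [Oc Oa]]]].
- by rewrite -ltnS; exact: leq_trans hlt hn.
- by exfalso; apply: (G_nopair HF Hstd Hsep np Sx nBx nBsx ndx (fun y a b c d => minx y (conj a (conj b (conj c d)))) h1 h2).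
- right; exists O; split=> //; split=> // [[s [Fs hs]]]; apply: Oa; exists s; split=> //; by left.
Qed.
End Sep.

Section PTree.
Variables (n : nat) (par : nat -> nat).
Hypothesis hpar : forall i, (0 < i)%N -> (i < n)%N -> (par i < i)%N.

Definition pe : rel 'I_n := fun i j => ((par j == i) && (0 < j)%N) || ((par i == j) && (0 < i)%N).

Lemma pe_sym : symmetric pe.
Proof. by move=> i j; rewrite /pe orbC. Qed.

Lemma pe_irr : irreflexive pe.
Proof.
move=> i; rewrite /pe orbb; apply/negP => /andP [/eqP h hi].
have := hpar hi (ltn_ord i); rewrite h; lia.
Qed.

Lemma pe_down i j : pe i j -> (j < i)%N -> par i = j /\ (0 < i)%N.
Proof.
rewrite /pe => /orP [/andP [/eqP h hj]|/andP [/eqP h hi]] lt; last by [].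
exfalso; have := hpar hj (ltn_ord j); rewrite h; lia.
Qed.

Lemma max_in (s : seq 'I_n) a : exists2 m, m \in a :: s & forall x, x \in a :: s -> (x <= m)%N.
Proof.
elim: s a => [|b s IH] a.
  by exists a; [rewrite inE eqxx | move=> x; rewrite inE => /eqP ->].
case: (IH b) => m1 m1in h1.
case: (leqP a m1) => ha.
  exists m1; first by rewrite inE m1in orbT.
  by move=> x; rewrite inE => /orP [/eqP ->|xin]; [ | exact: h1].
exists a; first by rewrite inE eqxx.
move=> x; rewrite inE => /orP [/eqP ->|xin] //; have := h1 x xin; lia.
Qed.

Lemma pe_acyc (p : seq 'I_n) : ~~ (ucycleb pe p && (2 < size p)%N).
Proof.
apply/negP => /andP [/andP [cp up] sp].
have [m mp mmax] : exists2 m, m \in p & forall x, x \in p -> (x <= m)%N.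
  case: p cp up sp => // a p _ _ _; exact: max_in.
case: (rot_to mp) => i s' er.
have cp' : cycle pe (m :: s') by rewrite -er rot_cycle.
have up' : uniq (m :: s') by rewrite -er rot_uniq.
have sz : (2 < size (m :: s'))%N by rewrite -er size_rot.
have inp x : x \in s' -> x \in p by move=> h; rewrite -(mem_rot i) er inE h orbT.
case: s' er cp' up' sz inp => [|a s''] // er cp' up' sz inp.
case: s'' er cp' up' sz inp => [|c s3] // er cp' up' sz inp.
rewrite /= rcons_path in cp'.
case/andP: cp' => e1 /andP [_ e2].
set b := last c s3 in e2.
have ain : a \in p by apply: inp; rewrite inE eqxx.
have bin : b \in c :: s3 by exact: mem_last.
have bin' : b \in p by apply: inp; rewrite inE bin orbT.
move: up'; rewrite /= !inE negb_or => /andP [/andP [nma nmcs] /andP [nab _]].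
have ha : par m = a.
  have e1' : pe a m by rewrite pe_sym.
  have lt1 : (a < m)%N.
    have := mmax a ain; rewrite leq_eqVlt => /orP [/eqP h|//].
    by move: nma; rewrite eq_sym => /eqP []; apply: val_inj.
  by case: (pe_down e1 lt1).
have hb : par m = b.
  have lt1 : (b < m)%N.
    have := mmax b bin'; rewrite leq_eqVlt => /orP [/eqP h|//].
    have emb : b = m by apply: val_inj.
    by move: nmcs; rewrite -emb; move: bin; rewrite inE => ->.
  have e2' : pe m b by rewrite pe_sym; case/andP: e2.
  by case: (pe_down e2' lt1).
have eab : a = b by apply: val_inj; rewrite /= -ha -hb.
by move: nab; rewrite eab; move: bin; rewrite inE => ->.
Qed.

Lemma pe_conn (hn : (0 < n)%N) : forall k (i : 'I_n), (i <= k)%N -> connect pe i (Ordinal hn).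
Proof.
elim=> [|k IH] i hi.
  have -> : i = Ordinal hn by apply: ord_inj => /=; lia.
  exact: connect0.
case: (posnP i) => hi0.
  have -> : i = Ordinal hn by apply: ord_inj => /=; lia.
  exact: connect0.
have hp := hpar hi0 (ltn_ord i).
have pn : (par i < n)%N by apply: ltn_trans hp (ltn_ord i).
apply: connect_trans (IH (Ordinal pn) _); last by rewrite /=; lia.
by apply: connect1; rewrite /pe /= eqxx hi0 orbT.
Qed.

Lemma pe_tree (hn : (0 < n)%N) : is_tree pe.
Proof.
split; first exact: pe_sym.
split; first exact: pe_irr.
split; last exact: pe_acyc.
move=> x y; apply: connect_trans (pe_conn hn (leqnn x)) _.
rewrite (sym_connect_sym pe_sym); exact: pe_conn (leqnn y).
Qed.
End PTree.

Section Build.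
Variables (U : Type) (star : U -> U) (Sv : U -> Prop) (F : (U -> Prop) -> Prop) (l : list U).
Hypothesis starK : forall x, star (star x) = x.
Hypothesis Hsub : forall x, Sv x -> Sv (star x).
Hypothesis Hfin : forall x, Sv x -> List.In x l.
Hypothesis HFs : forall s x, F s -> s x -> Sv x.

Record tstr := TS { tn : nat; tpar : nat -> nat; tlab : nat -> U }.
Definition starP T t u := u = tlab T t \/ exists j, (0 < j < tn T)%N /\ tpar T j = t /\ u = star (tlab T j).
Definition parok T := forall i, (0 < i)%N -> (i < tn T)%N -> (tpar T i < i)%N.
Definition labok T := forall i, (i < tn T)%N -> Sv (tlab T i).
Definition RC w T := (0 < tn T)%N /\ tlab T 0 = w /\ parok T /\ labok T /\
  (forall t, (0 < t < tn T)%N -> F (starP T t)).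

Definition attach A C := TS (tn A + tn C)
  (fun i => if (i < tn A)%N then tpar A i else if i == tn A then 0 else tn A + tpar C (i - tn A))
  (fun i => if (i < tn A)%N then tlab A i else tlab C (i - tn A)).

Lemma attach_par A C : (0 < tn A)%N -> parok A -> parok C -> parok (attach A C).
Proof.
move=> hA pA pC i hi hin; rewrite /attach /=.
case h1: (i < tn A)%N; first exact: pA.
case h2: (i == tn A); first lia.
move: hin => /= hin; have := pC (i - tn A); lia.
Qed.

Lemma attach_lab A C : labok A -> labok C -> labok (attach A C).
Proof.
move=> lA lC i hi; rewrite /attach /=; case h1: (i < tn A)%N; first exact: lA.
apply: lC; move: hi => /= hi; lia.
Qed.

Lemma attach_lo A C t u : (0 < tn A)%N -> (0 < tn C)%N -> parok A -> parok C -> (t < tn A)%N ->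
  starP (attach A C) t u <-> starP A t u \/ (t = 0 /\ u = star (tlab C 0)).
Proof.
move=> hA hC pA pC ht; rewrite /starP /attach /=; split.
  case=> [->|[j [hj [hp ->]]]]; first by rewrite ht; left; left.
  move: hp; case h1: (j < tn A)%N => hp.
    by left; right; exists j; split=> //; lia.
  move: hp; case h2: (j == tn A) => hp.
    by right; split=> //; move/eqP: h2 => ->; rewrite subnn.
  exfalso; lia.
case=> [[->|[j [hj [hp ->]]]]|[-> ->]]; first by rewrite ht; left.
  right; exists j; have hjA : (j < tn A)%N by lia.
  by rewrite hjA; split=> //; lia.
right; exists (tn A); rewrite ltnn eqxx subnn; split=> //; lia.
Qed.

Lemma attach_hi A C s u : (0 < tn A)%N -> parok A -> (s < tn C)%N ->
  starP (attach A C) (tn A + s) u <-> starP C s u.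
Proof.
move=> hA pA hs; rewrite /starP /attach /=; split.
  case=> [->|[j [hj [hp ->]]]].
    by left; rewrite ltnNge leq_addr /= addKn.
  move: hp; case h1: (j < tn A)%N => hp.
    exfalso; have := pA j; lia.
  move: hp; case h2: (j == tn A) => hp; first by exfalso; lia.
  right; exists (j - tn A); split; first lia.
  split; first lia.
  by [].
case=> [->|[j [hj [hp ->]]]].
  by left; rewrite ltnNge leq_addr /= addKn.
right; exists (tn A + j).
have h1 : (tn A + j < tn A)%N = false by lia.
have h2 : (tn A + j == tn A) = false by lia.
rewrite h1 h2 addKn; split; first lia.
by rewrite hp.
Qed.

Lemma pred_eq (P Q : U -> Prop) : (forall u, P u <-> Q u) -> P = Q.
Proof. move=> h; apply: functional_extensionality => u; apply: propositional_extensionality; exact: h. Qed.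

Lemma build w : Bl star F w -> exists T, RC w T /\ F (starP T 0).
Proof.
elim=> {w} s w Fs sw Hy IH.
have Sw : Sv w by exact: HFs sw.
have key : forall l0, exists T, RC w T /\ forall u, starP T 0 u <->
    u = w \/ exists y, List.In y l0 /\ s y /\ y <> w /\ u = y.
  elim=> [|y l0 [T [[hT [hl [hp [hlb hF]]]] HT]]].
    exists (TS 1 (fun _ => 0) (fun _ => w)); split.
      split=> //; split=> //; split; first by move=> i h1 h2; exfalso; move: h2 => /=; lia.
      by split; [move=> i _; exact: Sw | move=> t /andP [h1 h2]; exfalso; move: h2 => /=; lia].
    move=> u; rewrite /starP /=; split.
      by case=> [->|[j [hj _]]]; [left | exfalso; move: hj => /=; lia].
    by case=> [->|[y [[] _]]]; left.
  case: (classic (s y /\ y <> w)) => [[sy nyw]|hno]; last first.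
    exists T; split; first by [].
    move=> u; rewrite HT; split; case=> [->|[y' [hin [sy' [ny' ->]]]]]; try by left.
      by right; exists y'; split=> //; right.
    right; exists y'; split=> //; case: hin => [e|//]; subst y'.
    by case: hno.
  case: (IH y sy nyw) => C [[hC [lC [pC [lbC FC]]]] FC0].
  exists (attach T C); split.
    split; first by rewrite /=; lia.
    split; first by rewrite /= hT.
    split; first exact: attach_par.
    split; first exact: attach_lab.
    move=> t /andP [ht0 ht]; case: (ltnP t (tn T)) => htT.
      have -> : starP (attach T C) t = starP T t.
        apply: pred_eq => u; rewrite attach_lo //; split; last by left.
        by case=> // [[e _]]; lia.
      by apply: hF; rewrite ht0.
    have -> : t = tn T + (t - tn T) by lia.
    have -> : starP (attach T C) (tn T + (t - tn T)) = starP C (t - tn T).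
      by apply: pred_eq => u; rewrite attach_hi //; move: ht => /=; lia.
    case: (posnP (t - tn T)) => h0; first by rewrite h0.
    by apply: FC; rewrite h0 /=; move: ht => /=; lia.
  move=> u; rewrite attach_lo // HT lC starK; split.
    case=> [[->|[y' [hin [sy' [ny' ->]]]]]|[_ ->]]; first by left.
      by right; exists y'; split=> //; right.
    by right; exists y; split=> //; left.
  case=> [->|[y' [[e|hin] [sy' [ny' ->]]]]]; first by left; left.
    by subst y'; right.
  by left; right; exists y'.
case: (key l) => T [hRC HT]; exists T; split=> //.
have -> : starP T 0 = s; last by [].
apply: pred_eq => u; rewrite HT; split.
  by case=> [->|[y [_ [sy [_ ->]]]]].
move=> su; case: (classic (u = w)) => [->|nuw]; first by left.
by right; exists u; split=> //; apply: Hfin; exact: HFs su.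
Qed.

Lemma pair_tree w : Bl star F w -> Bl star F (star w) -> exists_S_tree_over star Sv F.
Proof.
move=> B1 B2.
case: (build B1) => T1 [[h1 [l1 [p1 [lb1 F1]]]] F10].
case: (build B2) => T2 [[h2 [l2 [p2 [lb2 F2]]]] F20].
set T := attach T1 T2.
have pT : parok T by exact: attach_par.
have lbT : labok T by exact: attach_lab.
have hn : (0 < tn T)%N by rewrite /=; lia.
pose e := pe (n := tn T) (tpar T).
pose alpha := fun (i j : 'I_(tn T)) => if (tpar T j == i) && (0 < j)%N then tlab T j else star (tlab T i).
have nocyc : forall i j : 'I_(tn T), tpar T j = i -> (0 < j)%N -> tpar T i = j -> (0 < i)%N -> False.
  move=> i j hj j0 hi i0; have := pT j j0 (ltn_ord j); have := pT i i0 (ltn_ord i); lia.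
exists ('I_(tn T) : finType), e, alpha; split; first exact: pe_tree.
split.
  have hA : (tn T1 < tn T)%N by rewrite /=; lia.
  exists (Ordinal hn), (Ordinal hA); rewrite /e /pe /= ltnn eqxx /=; apply/orP; left.
  by [].
split.
  move=> x y; rewrite /e /pe /alpha => /orP [/andP [/eqP hy y0]|/andP [/eqP hx x0]].
    rewrite hy eqxx y0 /=.
    case: (boolP ((tpar T x == y) && (0 < x)%N)) => [/andP [/eqP hx x0]|_].
      by exfalso; apply: (nocyc x y).
    by split=> //; apply: lbT; exact: ltn_ord.
  case: (boolP ((tpar T y == x) && (0 < y)%N)) => [/andP [/eqP hy y0]|_].
    by exfalso; apply: (nocyc x y).
  rewrite hx eqxx x0 starK; split=> //; apply: Hsub; apply: lbT; exact: ltn_ord.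
have actual : forall t : 'I_(tn T), forall u, (exists y, e y t /\ u = alpha y t) <->
   ((0 < t)%N /\ u = tlab T t) \/ exists j, (0 < j < tn T)%N /\ tpar T j = t /\ u = star (tlab T j).
  move=> t u; split.
    case=> yy [hy ->]; move: hy; rewrite /e /pe /alpha => /orP [/andP [/eqP ht t0]|/andP [/eqP hy y0]].
      by left; rewrite ht eqxx t0.
    case: (boolP ((tpar T t == yy) && (0 < t)%N)) => [/andP [/eqP ht t0]|_].
      by exfalso; apply: (nocyc t yy).
    by right; exists yy; rewrite y0 ltn_ord.
  case=> [[t0 ->]|[j [/andP [j0 jn] [hj ->]]]].
    have pn : (tpar T t < tn T)%N by exact: ltn_trans (pT t t0 (ltn_ord t)) (ltn_ord t).
    exists (Ordinal pn); rewrite /e /pe /alpha /= eqxx t0 /=; by split.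
  have hj2 : tpar T (Ordinal jn) = t := hj. have j02 : (0 < Ordinal jn)%N := j0.
  exists (Ordinal jn); rewrite /e /pe /alpha hj2 eqxx j02 orbT; split=> //.
  case: (boolP ((tpar T t == j) && (0 < t)%N)) => [/andP [/eqP ht t0]|//].
  by exfalso; apply: (nocyc t (Ordinal jn)).
move=> t.
have -> : (fun u => exists y, e y t /\ u = alpha y t) = starP T t.
  apply: pred_eq => u; rewrite actual /starP.
  case: (posnP t) => t0.
    split; first by case=> [[] | h]; [rewrite t0 | right].
    case=> [->|h]; last by right.
    right; exists (tn T1); rewrite t0 /= ltnn eqxx subnn l2 starK.
    split; [lia | split=> //].
    by rewrite h1.
  split; first by case=> [[_ ->]|h]; [left | right].
  by case=> [->|h]; [left | right].
case: (ltnP t (tn T1)) => ht.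
  case: (posnP t) => t0.
    have -> : starP T t = starP T1 0.
      apply: pred_eq => u; rewrite t0 attach_lo //; split; last by left.
      case=> [//|[_ ->]]; by rewrite l2 starK; left.
    by [].
  have -> : starP T t = starP T1 t.
    apply: pred_eq => u; rewrite attach_lo //; split; last by left.
    by case=> // [[e' _]]; lia.
  by apply: F1; rewrite t0 ht.
have et : (t : nat) = tn T1 + (t - tn T1) by lia.
have tT : (t - tn T1 < tn T2)%N by have := ltn_ord t; rewrite /T /=; lia.
have -> : starP T t = starP T2 (t - tn T1).
  by apply: pred_eq => u; rewrite {1}et attach_hi.
case: (posnP (t - tn T1)) => h0; first by rewrite h0.
by apply: F2; rewrite h0.
Qed.
End Build.

Section Walk.
Variables (V : finType) (e : rel V) (s : V -> V).
Hypothesis Htree : is_tree e.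
Hypothesis hs : forall t, e (s t) t.
Hypothesis hnb : forall t, s (s t) <> t.

Variable t0 : V.
Definition w k := iter k s t0.
Arguments w : simpl never.

Lemma walk_false : False.
Proof.
case: Htree => esym [eirr [_ eac]].
have wS k : w k.+1 = s (w k) by rewrite /w.
have ew k : e (w k) (w k.+1) by rewrite esym wS.
have iotaS k : iota 0 k.+1 = iota 0 k ++ [:: k] by rewrite -addn1 iotaD.
have uniq_up : forall k, (forall k', (k' < k)%N -> w k' \notin map w (iota 0 k')) -> uniq (map w (iota 0 k)).
  elim=> [|k IH] h //.
  rewrite iotaS map_cat cat_uniq IH; last by move=> k' hk'; apply: h; lia.
  by rewrite /= andbT orbF; apply: h.
have exP : exists j, w j \in map w (iota 0 j).
  apply: NNPP => hno.
  have hu := uniq_up #|V|.+1 (fun k' _ => introN idP (fun h => hno (ex_intro _ k' h))).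
  have := uniq_leq_size hu (fun x _ => mem_enum _ x).
  by rewrite size_map size_iota -cardE ltnn.
case: (ex_minnP exP) => j Pj jmin.
have uj : uniq (map w (iota 0 j)).
  apply: uniq_up => k' hk'; apply/negP => h; have := jmin _ h; lia.
case/mapP: Pj => i; rewrite mem_iota /= => hij eij.
set m := j - i.
have ej : j = i + m by rewrite /m; lia.
have split_ : map w (iota 0 j) = map w (iota 0 i) ++ map w (iota i m).
  by rewrite ej iotaD map_cat.
have uc : uniq (map w (iota i m)) by move: uj; rewrite split_ cat_uniq => /and3P [].
have m1 : m <> 1%N.
  move=> h; have : w j = w i by rewrite eij.
  rewrite ej h addn1 wS => hh; have := eirr (w i); rewrite -[X in e X _]hh.
  by rewrite hs.
have m2 : m <> 2%N.
  move=> h; have : w j = w i by rewrite eij.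
  by rewrite ej h addn2 !wS; apply: hnb.
have m0 : (0 < m)%N by rewrite /m; lia.
have hpath : forall k n, path e (w k) (map w (iota k.+1 n)).
  move=> k n; elim: n k => [|n IH] k //=; by rewrite ew IH.
have hlast : forall k n, last (w k) (map w (iota k.+1 n)) = w (k + n).
  move=> k n; elim: n k => [|n IH] k /=; first by rewrite addn0.
  by rewrite IH addSnnS.
have cyc : cycle e (map w (iota i m)).
  case: m m0 ej uc m1 m2 {split_} => [//|m'] _ ej _ _ _.
  rewrite /= rcons_path hpath /= hlast.
  have -> : w i = w (i + m').+1 by rewrite -eij ej addnS.
  exact: ew.
apply: (negP (eac (map w (iota i m)))); rewrite /ucycleb cyc uc /= size_map size_iota.
by lia.
Qed.
End Walk.

Lemma excl (U : Type) (le : U -> U -> Prop) (star : U -> U) (Sv : U -> Prop) (F : (U -> Prop) -> Prop) :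
  exists_S_tree_over star Sv F -> (exists O, tangle le star Sv F O) -> False.
Proof.
move=> [V [e [alpha [Ht [[x0 [y0 _]] [Hal HFt]]]]]] [O [[Oo1 Oo2] [_ Oav]]].
case: (classic (exists t, forall y, e y t -> O (alpha y t))) => [[t ht]|hno].
  apply: Oav; exists (fun u => exists y, e y t /\ u = alpha y t); split; first exact: HFt.
  by move=> u [y [hy ->]]; apply: ht.
have H : forall t, exists y, e y t /\ ~ O (alpha y t).
  move=> t; apply: NNPP => h; apply: hno; exists t => y hy; apply: NNPP => ho; apply: h; by exists y.
pose s t := proj1_sig (constructive_indefinite_description _ (H t)).
have hs t : e (s t) t /\ ~ O (alpha (s t) t) by rewrite /s; case: constructive_indefinite_description.
apply: (@walk_false V e s Ht (fun t => proj1 (hs t)) _ x0).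
move=> t est.
set u := s t in est.
have [eut nOut] := hs t.
have [eu2 nO2] := hs u.
rewrite est in nO2.
have [Sv1 Ast] := Hal u t eut.
case: (proj1 (Oo2 _ Sv1)) => h; first by apply: nOut.
by apply: nO2; rewrite Ast.
Qed.

Theorem theorem4p4 (U : Type) (le : U -> U -> Prop) (star : U -> U)
  (join meet : U -> U -> U) (Sv : U -> Prop) (F : (U -> Prop) -> Prop) :
  is_universe le star join meet ->
  is_subsystem star Sv ->
  finite_sys Sv ->
  (forall sigma, F sigma -> is_star le star sigma /\ (forall x, sigma x -> Sv x)) ->
  standard le star Sv F ->
  F_separable le star join Sv F ->
  (exists_S_tree_over star Sv F \/ (exists O, tangle le star Sv F O)) /\
  ~ (exists_S_tree_over star Sv F /\ (exists O, tangle le star Sv F O)).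
Proof.
move=> Huniv Hsub [l Hfin] HF Hstd Hsep; split; last by case=> h1 h2; exact: excl h1 h2.
case: (mainQ Huniv Hsub Hfin (leqnn _) HF Hstd Hsep) => [[w [B1 B2]]|hO]; last by right.
left; apply: (pair_tree (l := l) _ Hsub Hfin _ B1 B2).
- by move=> x; case: Huniv => _ [_ [_ [h _]]].
- by move=> s x Fs sx; exact: (proj2 (HF s Fs) x sx).
Qed.
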